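(* Over profiles whose ballots are strict weak orders (ties allowed), let $f$ be a VCCR satisfying Anonymity, Neutrality, Availability, Neutral Indifference, Monotonicity for two-candidate profiles (in particular, if it satisfies Monotonicity), Neutral Reversal, and Coherent IIA. Then $sc(\mathbf P)\supseteq f(\mathbf P)$ for every profile $\mathbf P$.
   Context: Profiles: $\mathbf P:V\to\mathcal W(X)$, $V$ nonempty finite set of voters, $X=X(\mathbf P)$ nonempty finite set of candidates (from fixed infinite sets), $\mathcal W(X)$ the strict weak orders on $X$ (irreflexive, transitive, negatively transitive; the empty relation, all tied, is allowed). ''Ranks $x$ above $y$'' means strictly. $\mathbf P_{|Y}$ restricts ballots to $Y$. $\mathrm{Margin}_{\mathbf P}(x,y)$ = #voters with $x$ strictly above $y$ minus #voters with $y$ strictly above $x$. $\mathcal M(\mathbf P)$: edges $x\to y$ weighted $\mathrm{Margin}_{\mathbf P}(x,y)$ when positive. Majority paths and strength (minimum consecutive margin) as usual. VCCR: $f(\mathbf P)$ asymmetric relation on $X(\mathbf P)$. $(x,y)\in sc(\mathbf P)$ iff $\mathrm{Margin}_{\mathbf P}(x,y)>0$ exceeds the strength of every majority path from $y$ to $x$. Moving up one place: for strict weak order $\succ$ on finite $X$ and $x$ not greatest, let $x'\ne x$ be $\succ$-minimal with $x\not\succ x'$; $\succ'$ results from moving $x$ up one place if it agrees with $\succ$ off $x$, and: if $x$ is tied with $x'$ in $\succ$ then in $\succ'$ $x$ is tied with nothing, $x\succ'x'$, and $y\succ x$ implies $y\succ'x$; if $x$ is tied with nothing in $\succ$, then $x$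 is tied with $x'$ in $\succ'$. Axioms: Anonymity (permuting which voter has which ballot, same voter set, leaves $f$ unchanged); Neutrality (if a bijection $\pi$ of candidates transforms $\mathbf P$ into $\mathbf P'$ ballot-wise, same voters and candidates, then $(x,y)\in f(\mathbf P)\iff(\pi x,\pi y)\in f(\mathbf P')$); Availability (some candidate is undefeated in every profile); Neutral Indifference (adding a voter with empty ballot leaves $f$ unchanged); Monotonicity (resp. for two-candidate profiles): moving $x$ up one place in one ballot of a (resp. two-candidate) profile preserves $(x,y)\in f(\cdot)$; Neutral Reversal (adding two voters with converse ballots leaves $f$ unchanged); Coherent IIA: with $\mathbf P\rightsquigarrow_{x,y}\mathbf P'$ meaning $\mathbf P_{|\{x,y\}}=\mathbf P'_{|\{x,y\}}$ and $\mathcal M(\mathbf P')$ obtainable from $\mathcal M(\mathbf P)$ by deleting zero or more candidates other than $x,y$ and deleting or reducing weights of zero or more edges not connecting $x,y$, $(x,y)\in f(\mathbf P)$ and $\mathbf P\rightsquigarrow_{x,y}\mathbf P'$ imply $(x,y)\in f(\mathbf P')$. *)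

(* Defs.v *)
From HB Require Import structures.
From mathcomp Require Import all_boot all_order all_algebra.
From mathcomp Require Import finmap.

Set Implicit Arguments.
Unset Strict Implicit.
Unset Printing Implicit Defensive.

Import Order.TTheory GRing.Theory Num.Theory.
Local Open Scope fset_scope.

Section Voting.
Variables (VT XT : choiceType).

(* Well-formedness (wf_profile) requires ballots to vanish outside the
   voter/candidate sets, so a profile is determined by its mathematical
   content. *)
Record profile := Profile {
  voters : {fset VT};
  cands  : {fset XT};
  ballot : VT -> XT -> XT -> bool  (* ballot v a b : v ranks a strictly above b *)
}.

Definition strict_weak_order (X : {fset XT}) (r : XT -> XT -> bool) : Prop :=
  [/\ (forall a, a \in X -> ~~ r a a),
      (forall a b c, a \in X -> b \in X -> c \in X -> r a b -> r b c -> r a c)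
    & (forall a b c, a \in X -> b \in X -> c \in X ->
         ~~ r a b -> ~~ r b c -> ~~ r a c)].

Definition wf_profile (P : profile) : Prop :=
  [/\ voters P != fset0,
      cands P != fset0,
      (forall v a b, ballot P v a b ->
         [/\ v \in voters P, a \in cands P & b \in cands P])
    & (forall v, v \in voters P -> strict_weak_order (cands P) (ballot P v))].

Definition margin (P : profile) (a b : XT) : int :=
  ((count (fun v => ballot P v a b) (voters P))%:Z
   - (count (fun v => ballot P v b a) (voters P))%:Z)%R.

(* a majority path a = a0, a1, ..., an = b (the list s = [a1; ...; an]),
   of distinct candidates, each with a positive margin over the next *)
Definition majority_path (P : profile) (a : XT) (s : seq XT) (b : XT) : Prop :=
  [/\ s != [::], last a s = b, uniq (a :: s)
    & path (fun u w => (0 < margin P u w)%R) a s].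

Fixpoint strength (P : profile) (a : XT) (s : seq XT) : int :=
  match s with
  | [::] => 0%R
  | b :: s' =>
      match s' with
      | [::] => margin P a b
      | _ :: _ => Num.min (margin P a b) (strength P b s')
      end
  end.

Definition sc (P : profile) (x y : XT) : Prop :=
  (0 < margin P x y)%R /\
  forall s, majority_path P y s x -> (strength P y s < margin P x y)%R.

(* ---- VCCR and axioms; f P x y means (x, y) \in f(P) ---- *)
Definition vccr := profile -> XT -> XT -> Prop.

Definition is_vccr (f : vccr) : Prop :=
  forall P, wf_profile P -> forall x y, f P x y ->
    [/\ x \in cands P, y \in cands P & ~ f P y x].

Definition anonymity (f : vccr) : Prop :=
  forall (P P' : profile) (sigma : VT -> VT),
    wf_profile P -> wf_profile P' ->
    voters P' = voters P -> cands P' = cands P ->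
    (forall v, v \in voters P -> sigma v \in voters P) ->
    {in voters P &, injective sigma} ->
    (forall v, v \in voters P -> ballot P' v =2 ballot P (sigma v)) ->
    forall x y, f P' x y <-> f P x y.

Definition neutrality (f : vccr) : Prop :=
  forall (P P' : profile) (pi : XT -> XT),
    wf_profile P -> wf_profile P' ->
    voters P' = voters P -> cands P' = cands P ->
    (forall a, a \in cands P -> pi a \in cands P) ->
    {in cands P &, injective pi} ->
    (forall v a b, v \in voters P -> a \in cands P -> b \in cands P ->
       ballot P' v (pi a) (pi b) = ballot P v a b) ->
    forall x y, x \in cands P -> y \in cands P ->
      (f P x y <-> f P' (pi x) (pi y)).

Definition availability (f : vccr) : Prop :=
  forall P, wf_profile P -> exists2 x, x \in cands P & forall y, ~ f P y x.

Definition neutral_indifference (f : vccr) : Prop :=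
  forall (P P' : profile) (v : VT),
    wf_profile P -> wf_profile P' ->
    v \notin voters P -> voters P' = v |` voters P -> cands P' = cands P ->
    (forall u, u \in voters P -> ballot P' u =2 ballot P u) ->
    (forall a b, ballot P' v a b = false) ->
    forall x y, f P' x y <-> f P x y.

Definition neutral_reversal (f : vccr) : Prop :=
  forall (P P' : profile) (v1 v2 : VT),
    wf_profile P -> wf_profile P' ->
    v1 != v2 -> v1 \notin voters P -> v2 \notin voters P ->
    voters P' = v1 |` (v2 |` voters P) -> cands P' = cands P ->
    (forall u, u \in voters P -> ballot P' u =2 ballot P u) ->
    (forall a b, ballot P' v2 a b = ballot P' v1 b a) ->
    forall x y, f P' x y <-> f P x y.

Definition tied (r : XT -> XT -> bool) (a b : XT) : bool := ~~ r a b && ~~ r b a.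

(* r' results from r (strict weak orders on X) by moving x up one place *)
Definition moved_up (X : {fset XT}) (r r' : XT -> XT -> bool) (x : XT) : Prop :=
  [/\ x \in X,
      (exists2 z, z \in X & r z x),
      (forall a b, a \in X -> b \in X -> a != x -> b != x -> r' a b = r a b)
    & exists x',
      [/\ [/\ x' \in X, x' != x & ~~ r x x'],
          (forall z, z \in X -> z != x -> ~~ r x z -> ~~ r x' z) ,
          (tied r x x' ->
             [/\ (forall z, z \in X -> z != x -> ~~ tied r' x z),
                 r' x x'
               & (forall y, y \in X -> r y x -> r' y x)])
        & ((forall z, z \in X -> z != x -> ~~ tied r x z) -> tied r' x x')]].

Definition monotonicity_two (f : vccr) : Prop :=
  forall (P P' : profile) (v : VT) (x y : XT),
    wf_profile P -> wf_profile P' -> #|` cands P| = 2 ->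
    voters P' = voters P -> cands P' = cands P ->
    v \in voters P ->
    (forall u, u \in voters P -> u != v -> ballot P' u =2 ballot P u) ->
    moved_up (cands P) (ballot P v) (ballot P' v) x ->
    f P x y -> f P' x y.

Definition same_restriction (P P' : profile) (Y : {fset XT}) : Prop :=
  [/\ voters P' = voters P,
      cands P' `&` Y = cands P `&` Y
    & forall v a b, v \in voters P -> a \in cands P `&` Y -> b \in cands P `&` Y ->
        ballot P' v a b = ballot P v a b].

(* M(P') obtained from M(P) by deleting candidates other than x, y and
   deleting / reducing the weights of edges not connecting x and y *)
Definition graph_reduct (P P' : profile) (x y : XT) : Prop :=
  [/\ cands P' `<=` cands P, x \in cands P', y \in cands P',
      margin P' x y = margin P x y
    & forall a b, a \in cands P' -> b \in cands P' -> (0 < margin P' a b)%R ->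
        (margin P' a b <= margin P a b)%R].

Definition coherent_iia (f : vccr) : Prop :=
  forall (P P' : profile) (x y : XT),
    wf_profile P -> wf_profile P' -> f P x y ->
    same_restriction P P' [fset x; y] -> graph_reduct P P' x y ->
    f P' x y.

End Voting.

(* Main.v *)
Require Import Defs.
From HB Require Import structures.
From mathcomp Require Import all_boot all_order all_algebra.
From mathcomp Require Import finmap.
From mathcomp Require Import zify ring.
Local Open Scope fset_scope.
Local Open Scope nat_scope.

Set Implicit Arguments.
Unset Strict Implicit.
Unset Printing Implicit Defensive.
Import Order.TTheory GRing.Theory Num.Theory.



Section Gen.
Variables (VT XT : choiceType).
Implicit Types (P Q : profile VT XT) (C : {fset XT}) (B : XT -> XT -> bool).

Definition E : XT -> XT -> bool := fun _ _ => false.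
Definition lv C (h : XT -> nat) : XT -> XT -> bool :=
  fun a b => [&& a \in C, b \in C & h b < h a].
Definition flip (B : XT -> XT -> bool) := fun a b => B b a.

Lemma swo_E C : strict_weak_order C E.
Proof. by split. Qed.

Lemma swo_lv C h : strict_weak_order C (lv C h).
Proof.
split; rewrite /lv.
- by move=> a aC; rewrite ltnn !andbF.
- move=> a b c aC bC cC; rewrite aC bC cC /= => h1 h2; exact: ltn_trans h2 h1.
- move=> a b c aC bC cC; rewrite aC bC cC /= -!leqNgt => h1 h2; exact: leq_trans h1 h2.
Qed.

Lemma swo_flip_lv C h : strict_weak_order C (flip (lv C h)).
Proof.
split; rewrite /flip /lv.
- by move=> a aC; rewrite ltnn !andbF.
- move=> a b c aC bC cC; rewrite aC bC cC /= => h1 h2; exact: ltn_trans h1 h2.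
- move=> a b c aC bC cC; rewrite aC bC cC /= -!leqNgt => h1 h2; exact: leq_trans h2 h1.
Qed.

Lemma swo_comp C r (pi : XT -> XT) : strict_weak_order C r ->
  (forall a, a \in C -> pi a \in C) ->
  strict_weak_order C (fun a b => r (pi a) (pi b)).
Proof.
move=> [h1 h2 h3] hp; split.
- by move=> a aC; apply: h1; apply: hp.
- by move=> a b c aC bC cC; apply: h2; apply: hp.
- by move=> a b c aC bC cC; apply: h3; apply: hp.
Qed.

Lemma swo_restr C D r : strict_weak_order C r -> {subset D <= C} ->
  strict_weak_order D (fun a b => [&& r a b, a \in D & b \in D]).
Proof.
move=> [h1 h2 h3] hs; split.
- by move=> a aD; rewrite (negbTE (h1 a (hs a aD))).
- move=> a b c aD bD cD; rewrite aD bD cD !andbT; apply: h2; exact: hs.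
- move=> a b c aD bD cD; rewrite aD bD cD !andbT; apply: h3; exact: hs.
Qed.

Definition cnt P a b := count (fun v => ballot P v a b) (voters P).

Lemma marginE P a b : margin P a b = ((cnt P a b)%:Z - (cnt P b a)%:Z)%R.
Proof. by []. Qed.

Lemma count_fsetU1 (v : VT) (V : {fset VT}) (p : pred VT) :
  v \notin V -> count p (v |` V) = p v + count p V.
Proof.
move=> vV.
have pe : perm_eq (v |` V) (v :: V).
  apply: uniq_perm; first exact: fset_uniq.
    by rewrite /= vV fset_uniq.
  by move=> u; rewrite in_fset1U inE.
by rewrite (permP pe).
Qed.

Definition addvot P (v : VT) (B : XT -> XT -> bool) : profile VT XT :=
  Profile (v |` voters P) (cands P) (fun u => if u == v then B else ballot P u).

Lemma cnt_addvot P v B a b : v \notin voters P ->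
  cnt (addvot P v B) a b = B a b + cnt P a b.
Proof.
move=> vV; rewrite /cnt /= count_fsetU1 // eqxx; congr (_ + _).
apply: eq_in_count => u uV /=.
by case: eqP => // e; move: vV; rewrite -e uV.
Qed.

Lemma wf_addvot P v B : wf_profile P -> v \notin voters P ->
  (forall a b, B a b -> a \in cands P /\ b \in cands P) ->
  strict_weak_order (cands P) B -> wf_profile (addvot P v B).
Proof.
move=> [h1 h2 h3 h4] vV hB sB; split => //=.
- by apply/eqP => /fsetP /(_ v); rewrite in_fset1U eqxx inE.
- move=> u a b; case: eqP => [-> | ne].
    by move=> /hB [? ?]; rewrite in_fset1U eqxx.
  by move=> /h3 [? ? ?]; rewrite in_fset1U; split => //; apply/orP; right.
- move=> u; rewrite in_fset1U; case: eqP => [_ _ | ne /= uV] //.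
  exact: h4.
Qed.

End Gen.


Section Aug.
Variables (VT XT : choiceType).
Variable (VT_infinite : forall s : {fset VT}, exists v, v \notin s).
Variable (f : vccr VT XT).
Variables (hind : neutral_indifference f) (hrev : neutral_reversal f).
Variables (x y : XT).
Implicit Types (P Q : profile VT XT) (C : {fset XT}) (B : XT -> XT -> bool).

Definition ext P Q n d :=
  [/\ wf_profile Q, cands Q = cands P, (forall a b, margin Q a b = margin P a b),
      cnt Q x y = cnt P x y + d & cnt Q y x = cnt P y x + d] /\
  (size (voters Q) = size (voters P) + n /\ (f P x y -> f Q x y)).

Lemma ext_refl P : wf_profile P -> ext P P 0 0.
Proof. by move=> w; rewrite /ext !addn0. Qed.

Lemma ext_trans P Q R n d n' d' : ext P Q n d -> ext Q R n' d' -> ext P R (n + n') (d + d').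
Proof.
move=> [[w1 c1 m1 x1 y1] [s1 f1]] [[w2 c2 m2 x2 y2] [s2 f2]]; split; [split|split] => //.
- by rewrite c2.
- by move=> a b; rewrite m2 m1.
- by rewrite x2 x1 addnA.
- by rewrite y2 y1 addnA.
- by rewrite s2 s1 addnA.
- by move=> /f1 /f2.
Qed.

Lemma margin_addvot P v B a b : v \notin voters P ->
  margin (addvot P v B) a b = (margin P a b + ((B a b)%:Z - (B b a)%:Z))%R.
Proof.
move=> vV; rewrite !marginE !cnt_addvot //; lia.
Qed.

Lemma add_empty P : wf_profile P -> exists Q, ext P Q 1 0.
Proof.
move=> w; have [v vV] := VT_infinite (voters P).
have wQ : wf_profile (addvot P v (@E XT)).
  by apply: wf_addvot => //; apply: swo_E.
exists (addvot P v (@E XT)); split; [split|split] => //.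
- by move=> a b; rewrite margin_addvot // subrr addr0.
- by rewrite cnt_addvot // addn0.
- by rewrite cnt_addvot // addn0.
- by rewrite /= -!(count_predT (enum_fset _)) count_fsetU1 // addnC.
move=> fP; apply/(hind w wQ vV) => //; last by move=> a b /=; rewrite eqxx.
by move=> u uV a b /=; case: eqP => // e; move: vV; rewrite -e uV.
Qed.

Lemma add_pair P : wf_profile P -> x \in cands P -> y \in cands P -> x != y ->
  exists Q, ext P Q 2 1.
Proof.
move=> w xC yC xy; have [v2 v2V] := VT_infinite (voters P).
have [v1 v1V] := VT_infinite (v2 |` voters P).
have v12 : v1 != v2 by apply: contraNneq v1V => ->; rewrite in_fset1U eqxx.
have v1V' : v1 \notin voters P by apply: contra v1V; rewrite in_fset1U => ->; rewrite orbT.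
set B := lv (cands P) (fun u => (u == x) : nat).
have hB : forall a b, B a b -> a \in cands P /\ b \in cands P.
  by move=> a b /and3P [].
have w2 : wf_profile (addvot P v2 (flip B)).
  apply: wf_addvot => //; last exact: swo_flip_lv.
  by move=> a b /hB [].
have w1 : wf_profile (addvot (addvot P v2 (flip B)) v1 B).
  by apply: wf_addvot => //; apply: swo_lv.
have Bxy : B x y by rewrite /B /lv xC yC eqxx /= eq_sym (negbTE xy).
have Byx : B y x = false by rewrite /B /lv eqxx ltnNge leq_b1 !andbF.
exists (addvot (addvot P v2 (flip B)) v1 B); split; [split|split] => //.
- move=> a b; rewrite margin_addvot // margin_addvot // /flip; lia.
- by rewrite cnt_addvot // cnt_addvot // Bxy /flip Byx addnC.
- by rewrite cnt_addvot // cnt_addvot // Byx /flip Bxy add0n addnC.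
- by rewrite /= -!(count_predT (enum_fset _)) count_fsetU1 // count_fsetU1 // /= addnA addnC.
move=> fP; apply/(hrev w w1 v12 v1V' v2V) => //.
- move=> u uV a b /=; case: eqP => [e|_]; first by move: v1V'; rewrite -e uV.
  by case: eqP => // e; move: v2V; rewrite -e uV.
- by move=> a b /=; rewrite eqxx eq_sym (negbTE v12) eqxx.
Qed.

Lemma add_empties n P : wf_profile P -> exists Q, ext P Q n 0.
Proof.
elim: n P => [|n IH] P w; first by exists P; exact: ext_refl.
have [Q hQ] := add_empty w.
have [[wQ _ _ _ _] _] := hQ.
have [R hR] := IH Q wQ.
by exists R; have := ext_trans hQ hR.
Qed.

Lemma add_pairs n P : wf_profile P -> x \in cands P -> y \in cands P -> x != y ->
  exists Q, ext P Q (2 * n) n.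
Proof.
elim: n P => [|n IH] P w xC yC xy; first by exists P; rewrite muln0; exact: ext_refl.
have [Q hQ] := add_pair w xC yC xy.
have [[wQ cQ _ _ _] _] := hQ.
have [R hR] := IH Q wQ ltac:(by rewrite cQ) ltac:(by rewrite cQ) xy.
by exists R; have := ext_trans hQ hR; rewrite mulnS add1n.
Qed.

End Aug.


Section Bij.
Variable (VT : eqType).

Lemma bij_exists (T : eqType) (g1 g2 : VT -> T) (s2 s1 : seq VT) :
  uniq s1 -> uniq s2 -> perm_eq (map g1 s1) (map g2 s2) ->
  exists sigma : VT -> VT, [/\ forall v, v \in s2 -> sigma v \in s1,
     {in s2 &, injective sigma} & forall v, v \in s2 -> g1 (sigma v) = g2 v].
Proof.
elim: s2 s1 => [|v s2 IH] s1 u1 u2 pe.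
  by exists id; split.
move: u2 => /= /andP [vs2 u2].
have : g2 v \in map g1 s1 by rewrite (perm_mem pe) inE eqxx.
move=> /mapP [u us1 eu].
have pe' : perm_eq (map g1 (rem u s1)) (map g2 s2).
  have h := perm_map g1 (perm_to_rem us1).
  rewrite -(perm_cons (g1 u)); rewrite perm_sym in h.
  by apply: perm_trans h _; rewrite /= -eu.
have u1' : uniq (rem u s1) by apply: rem_uniq.
have [sg [h1 h2 h3]] := IH _ u1' u2 pe'.
have urem : u \notin rem u s1 by rewrite (mem_rem_uniq _ u1) inE eqxx.
exists (fun w => if w == v then u else sg w); split.
- move=> w; rewrite inE; case: eqP => [_ _ //|_ /= ws2].
  exact: mem_rem (h1 w ws2).
- move=> w1 w2; rewrite !inE.
  case: (eqVneq w1 v) => [-> _|ne1 /= w1s].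
    case: (eqVneq w2 v) => [-> //|ne2 /= w2s e].
    by move: (h1 w2 w2s); rewrite -e (negbTE urem).
  case: (eqVneq w2 v) => [-> _ e|ne2 /= w2s e].
    by move: (h1 w1 w1s); rewrite e (negbTE urem).
  exact: h2.
- move=> w; rewrite inE; case: eqP => [-> _ //|_ /= ws2].
  exact: h3.
Qed.

Lemma bij_types (V : seq VT) (a1 b1 a2 b2 : VT -> bool) : uniq V ->
  (forall v, v \in V -> ~~ (a1 v && b1 v)) ->
  (forall v, v \in V -> ~~ (a2 v && b2 v)) ->
  count a1 V = count a2 V -> count b1 V = count b2 V ->
  exists sigma : VT -> VT, [/\ forall v, v \in V -> sigma v \in V,
     {in V &, injective sigma} &
     forall v, v \in V -> a1 (sigma v) = a2 v /\ b1 (sigma v) = b2 v].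
Proof.
move=> uV as1 as2 ca cb.
have key : forall (a b : VT -> bool) t, (forall v, v \in V -> ~~ (a v && b v)) ->
   count_mem t (map (fun v => (a v, b v)) V) =
   let: (ta, tb) := t in
     (if ta then (if tb then 0 else count a V)
            else (if tb then count b V else size V - (count a V + count b V))).
  move=> a b [ta tb] hab; rewrite count_map.
  case: ta; case: tb.
  - rewrite (eq_in_count (a2 := pred0)) ?count_pred0 //.
    by move=> v vV /=; apply/eqP => -[ha hb]; move: (hab v vV); rewrite ha hb.
  - apply: eq_in_count => v vV /=; apply/eqP/idP => [[-> //]|ha].
    by move: (hab v vV); rewrite ha /= => /negbTE ->.
  - apply: eq_in_count => v vV /=; apply/eqP/idP => [[_ ->] //|hb].
    by move: (hab v vV); rewrite hb andbT => /negbTE ->.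
  - have e1 : count (fun v => (a v, b v) == (false, false)) V = count (predC (predU a b)) V.
      by apply: eq_in_count => v vV /=; case: (a v); case: (b v).
    have e2 := count_predUI a b V.
    have e3 : count (predI a b) V = 0.
      rewrite (eq_in_count (a2 := pred0)) ?count_pred0 //.
      by move=> v vV /=; apply/negbTE; exact: hab.
    have e4 := count_predC (predU a b) V.
    rewrite e1; lia.
have pe : perm_eq (map (fun v => (a1 v, b1 v)) V) (map (fun v => (a2 v, b2 v)) V).
  apply/allP => t _; apply/eqP.
  by rewrite (key _ _ _ as1) (key _ _ _ as2) ca cb.
have [sg [h1 h2 h3]] := bij_exists uV uV pe.
exists sg; split => // v vV; have := h3 v vV; by case=> -> ->.
Qed.

End Bij.


Section PartA.
Variables (VT XT : choiceType).
Variable (f : vccr VT XT).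
Variables (hv : is_vccr f) (han : anonymity f) (hne : neutrality f)
  (hmo : monotonicity_two f) (hci : coherent_iia f).
Implicit Types (P Q R : profile VT XT) (C : {fset XT}) (B : XT -> XT -> bool).

Lemma swo_asym C r a b : strict_weak_order C r -> a \in C -> b \in C ->
  ~~ (r a b && r b a).
Proof.
move=> [h1 h2 h3] aC bC; apply/negP => /andP [hab hba].
by move: (h1 a aC); rewrite (h2 a b a aC bC aC hab hba).
Qed.

Lemma wf_vanish R v a b : wf_profile R -> ballot R v a b ->
  [/\ v \in voters R, a \in cands R & b \in cands R].
Proof. by case=> _ _ h _; apply: h. Qed.

Lemma ballot2 R x y v a b : wf_profile R -> cands R = [fset x; y] ->
  v \in voters R ->
  ballot R v a b = ((a == x) && (b == y) && ballot R v x y) ||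
                   ((a == y) && (b == x) && ballot R v y x).
Proof.
move=> w cR vV; apply/idP/idP.
  move=> h; have [_ aC bC] := wf_vanish w h.
  have [_ _ _ h4] := w; have [irr _ _] := h4 v vV.
  move: aC bC h; rewrite cR !in_fset2.
  move=> /orP [] /eqP -> /orP [] /eqP -> h.
  - by move: (irr x); rewrite cR in_fset2 eqxx h => /(_ isT).
  - by rewrite !eqxx h.
  - by rewrite !eqxx h orbT.
  - by move: (irr y); rewrite cR in_fset2 eqxx orbT h => /(_ isT).
by case/orP => /andP [/andP [/eqP -> /eqP ->] ->].
Qed.

Definition sw (x y a : XT) := if a == x then y else if a == y then x else a.

Lemma sw_mem x y a : (sw x y a \in [fset x; y]) = (a \in [fset x; y]).
Proof.
rewrite /sw; case: (eqVneq a x) => [-> | nx]; first by rewrite !in_fset2 !eqxx orbT.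
by case: (eqVneq a y) => [-> | ny]; first by rewrite !in_fset2 !eqxx orbT.
Qed.

Lemma sw_inv x y a : x != y -> sw x y (sw x y a) = a.
Proof.
move=> xy; rewrite /sw; case: (eqVneq a x) => [->|nx].
  by rewrite eq_sym (negbTE xy) eqxx.
case: (eqVneq a y) => [->|ny]; first by rewrite eqxx.
by rewrite (negbTE nx) (negbTE ny).
Qed.

Lemma tie R x y : wf_profile R -> cands R = [fset x; y] -> x != y ->
  margin R x y = 0%R -> f R x y -> False.
Proof.
move=> w cR xy m0 fR.
pose Rs := Profile (voters R) (cands R) (fun v a b => ballot R v (sw x y a) (sw x y b)).
have [w1 w2 w3 w4] := w.
have swC : forall a, a \in cands R -> sw x y a \in cands R by move=> a; rewrite cR sw_mem.
have ws : wf_profile Rs.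
  rewrite /Rs; split => /=; [exact: w1|exact: w2| |].
  - move=> v a b /w3 [vV aC bC]; split => //.
      by rewrite cR -(sw_mem x y a) -cR.
    by rewrite cR -(sw_mem x y b) -cR.
  - by move=> v vV; apply: swo_comp => //; apply: w4.
have c2 : cands Rs = [fset x; y] by rewrite /Rs /=; exact: cR.
have swx : sw x y x = y by rewrite /sw eqxx.
have swy : sw x y y = x by rewrite /sw eqxx eq_sym (negbTE xy).
have xC : x \in cands R by rewrite cR in_fset2 eqxx.
have yC : y \in cands R by rewrite cR in_fset2 eqxx orbT.
have fRs : f Rs y x.
  have eV : voters R = voters Rs by rewrite /Rs.
  have eC : cands R = cands Rs by rewrite /Rs.
  have inj : {in cands Rs &, injective (sw x y)}.
    by move=> a b _ _; apply: (@can_inj _ _ _ (sw x y)) => c; apply: sw_inv.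
  have hb : forall v a b, v \in voters Rs -> a \in cands Rs -> b \in cands Rs ->
      ballot R v (sw x y a) (sw x y b) = ballot Rs v a b by rewrite /Rs.
  have h := hne ws w eV eC swC inj hb yC xC.
  by rewrite swx swy in h; apply: h.2.
have asy : forall v, v \in voters R -> ~~ (ballot R v x y && ballot R v y x).
  by move=> v vV; exact: (swo_asym (w4 v vV) xC yC).
have ca : cnt R x y = cnt R y x by move: m0; rewrite marginE; lia.
have [sg [s1 s2 s3]] := @bij_types _ (voters R)
   (fun v => ballot R v x y) (fun v => ballot R v y x)
   (fun v => ballot R v y x) (fun v => ballot R v x y) (fset_uniq _)
   asy ltac:(by move=> v vV; rewrite andbC; apply: asy)
   ca (esym ca).
have fR' : f R y x.
  have eV : voters Rs = voters R by rewrite /Rs.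
  have eC : cands Rs = cands R by rewrite /Rs.
  apply/(han w ws eV eC s1 s2 _ y x) => //.
  move=> v vV a b.
  have [e1 e2] := s3 v vV.
  have r1 : ballot Rs v x y = ballot R v y x by rewrite /Rs /= swx swy.
  have r2 : ballot Rs v y x = ballot R v x y by rewrite /Rs /= swx swy.
  rewrite (ballot2 a b ws c2 vV) (ballot2 a b w cR (s1 v vV)) e1 e2 r1 r2 //.
by have [_ _ /(_ fR')] := hv w fR.
Qed.

Lemma count_upd (s : seq VT) (p : pred VT) v : uniq s -> v \in s ->
  count (fun u => if u == v then false else p u) s + p v = count p s.
Proof.
move=> us vs; rewrite (permP (perm_to_rem vs)) [RHS](permP (perm_to_rem vs)) /= eqxx.
rewrite add0n addnC; congr (_ + _); apply: eq_in_count => u.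
by rewrite (mem_rem_uniq _ us) inE => /andP [/negbTE ->].
Qed.

Lemma neg_margin x y n : forall R, wf_profile R -> cands R = [fset x; y] -> x != y ->
  margin R x y = (- (n%:Z))%R -> f R x y -> False.
Proof.
elim: n => [|n IH] R w cR xy mR fR.
  by apply: (tie w cR xy) => //; rewrite mR.
have [w1 w2 w3 w4] := w.
have : has (fun v => ballot R v y x) (voters R).
  by rewrite has_count; move: mR; rewrite marginE /cnt; lia.
move=> /hasP [v vV vyx].
pose R' := Profile (voters R) (cands R) (fun u => if u == v then @E XT else ballot R u).
have w' : wf_profile R'.
  rewrite /R'; split => /=; [exact: w1|exact: w2| |].
  - by move=> u a b; case: eqP => // _; apply: w3.
  - move=> u uV; case: eqP => _; [exact: swo_E | exact: w4].
have xC : x \in cands R by rewrite cR in_fset2 eqxx.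
have yC : y \in cands R by rewrite cR in_fset2 eqxx orbT.
have vxy : ballot R v x y = false.
  by apply/negbTE; have := swo_asym (w4 v vV) xC yC; rewrite vyx andbT.
have [irr _ _] := w4 v vV.
have cR' : cands R' = [fset x; y] by rewrite /R' /=; exact: cR.
apply: (IH R' w' cR' xy).
  move: mR; rewrite /R' !marginE /cnt /=.
  have := count_upd (fun u => ballot R u x y) (fset_uniq (voters R)) vV.
  have := count_upd (fun u => ballot R u y x) (fset_uniq (voters R)) vV.
  rewrite vxy vyx.
  have eq1 : forall a b, count (fun u => (if u == v then @E XT else ballot R u) a b) (voters R)
      = count (fun u => if u == v then false else ballot R u a b) (voters R).
    by move=> a b; apply: eq_count => u; case: eqP.
  rewrite !eq1; lia.
have inC : forall a, a \in cands R -> a != x -> a = y.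
  by move=> a; rewrite cR in_fset2 => /orP [/eqP -> /eqP //|/eqP ->].
have eV : voters R' = voters R by rewrite /R'.
have eC : cands R' = cands R by rewrite /R'.
apply: (hmo w w' _ eV eC vV) fR.
- by rewrite cR cardfs2 xy.
- by move=> u uV /negbTE; rewrite /R' /= => ->.
rewrite /R' /=.
split => //.
- by exists y.
- move=> a b aC bC ax bx; rewrite eqxx (inC a aC ax) (inC b bC bx).
  by rewrite /E (negbTE (irr y yC)).
exists y; split.
- by rewrite yC eq_sym xy vxy.
- by move=> z zC zx _; rewrite (inC z zC zx) irr.
- by rewrite /tied vyx andbF.
- by move=> _; rewrite eqxx.
Qed.

Definition restr P (D : {fset XT}) : profile VT XT :=
  Profile (voters P) D (fun v a b => [&& ballot P v a b, a \in D & b \in D]).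

Lemma restrict2 P x y : wf_profile P -> f P x y -> x != y ->
  exists R, [/\ wf_profile R, cands R = [fset x; y], margin R x y = margin P x y & f R x y].
Proof.
move=> w fP xy; have [xC yC _] := hv w fP.
have [w1 w2 w3 w4] := w.
have sub : {subset [fset x; y] <= cands P}.
  by move=> a; rewrite in_fset2 => /orP [] /eqP ->.
have wR : wf_profile (restr P [fset x; y]).
  rewrite /restr; split => /=.
  - exact: w1.
  - by apply/eqP => /fsetP /(_ x); rewrite in_fset2 eqxx inE.
  - by move=> v a b /and3P [/w3 [? _ _] ? ?].
  - by move=> v vV; exact: (swo_restr (w4 v vV) sub).
have mR : forall a b, a \in [fset x; y] -> b \in [fset x; y] ->
    margin (restr P [fset x; y]) a b = margin P a b.
  move=> a b aC bC; rewrite !marginE /cnt /restr /=.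
  by congr (_ - _)%R; congr (Posz _); apply: eq_count => v; rewrite aC bC !andbT.
have xR : x \in [fset x; y] by rewrite in_fset2 eqxx.
have yR : y \in [fset x; y] by rewrite in_fset2 eqxx orbT.
have cR : cands (restr P [fset x; y]) = [fset x; y] by rewrite /restr.
exists (restr P [fset x; y]); split; [exact: wR|exact: cR|exact: mR|].
apply: (hci w wR fP).
- rewrite /same_restriction cR; split.
  + by rewrite /restr.
  + apply/fsetP => a; rewrite !in_fsetI; case: (boolP (a \in [fset x; y])) => h; rewrite ?andbF ?andbT //.
    by rewrite (sub a h).
  + by move=> v a b _; rewrite /restr /= !in_fsetI => /andP [_ ->] /andP [_ ->]; rewrite !andbT.
- rewrite /graph_reduct cR; split; [by apply/fsubsetP|exact: xR|exact: yR|exact: mR|].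
  by move=> a b aC bC _; rewrite mR.
Qed.

Lemma partA P x y : wf_profile P -> f P x y -> (0 < margin P x y)%R.
Proof.
move=> w fP.
have xy : x != y.
  by apply/eqP => e; subst y; have [_ _ h] := hv w fP; exact: h.
have [R [wR cR mR fR]] := restrict2 w fP xy.
rewrite -mR; case: (ltrP 0%R (margin R x y)) => // h.
exfalso; apply: (@neg_margin x y `|margin R x y|%N R wR cR xy) => //.
lia.
Qed.

End PartA.


Lemma sumn_mapD (T : Type) (F G : T -> nat) (s : seq T) :
  sumn (map (fun c => F c + G c) s) = sumn (map F s) + sumn (map G s).
Proof. elim: s => //= c s ->; lia. Qed.

Lemma sumn_mapM (T : Type) (F : T -> nat) k (s : seq T) :
  sumn (map (fun c => F c * k) s) = sumn (map F s) * k.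
Proof. elim: s => //= c s ->; lia. Qed.

Section TC.
Variables (VT XT : choiceType) (cs : seq XT) (x0 : XT).
Hypotheses (ucs : uniq cs) (k3 : 2 < size cs).

Definition nxt := next cs.

Lemma index_nxt a : a \in cs ->
  index (nxt a) cs = if (index a cs).+1 < size cs then (index a cs).+1 else 0.
Proof.
move=> aC; rewrite /nxt next_nth aC.
have := index_mem a cs; rewrite aC => ilt.
case E: cs ucs ilt => [//|c0 cs'] u ilt.
case: ifP => h.
  have -> : nth c0 cs' (index a (c0 :: cs')) = nth c0 (c0 :: cs') (index a (c0 :: cs')).+1 by [].
  by rewrite index_uniq.
rewrite nth_default /=; first by rewrite eqxx.
by move: h ilt => /= h ilt; lia.
Qed.

Lemma nxt_in a : a \in cs -> nxt a \in cs.
Proof. by rewrite /nxt mem_next. Qed.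

Lemma nxt_inj : injective nxt.
Proof. exact: (can_inj (prev_next ucs)). Qed.

Lemma nxt_neq a : a \in cs -> nxt a != a.
Proof.
move=> aC; apply/eqP => e.
have := index_nxt aC; rewrite e.
have := index_mem a cs; rewrite aC; case: ifP => h1 h2; lia.
Qed.

Lemma nxt2_neq a : a \in cs -> nxt (nxt a) != a.
Proof.
move=> aC; apply/eqP => e.
have := index_nxt (nxt_in aC); rewrite e index_nxt //.
have := index_mem a cs; rewrite aC => hlt.
case: (ltnP (index a cs).+1 (size cs)) => h1 /=;
  [case: (ltnP (index a cs).+2 (size cs)) | case: (ltnP 1 (size cs))] => h2 /=; lia.
Qed.

Definition Cs : {fset XT} := seq_fset tt cs.
Lemma inCs a : (a \in Cs) = (a \in cs).
Proof. exact: seq_fsetE. Qed.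

Definition hA c u := if u == c then 2 else if u == nxt c then 1 else 0.
Definition hB c u := if (u == c) || (u == nxt c) then 0 else 1.
Definition Lb := lv Cs (fun u => index u cs).

Definition decode (d : nat * XT) : XT -> XT -> bool :=
  match d.1 with
  | 0 => lv Cs (hA d.2)
  | 1 => lv Cs (hB d.2)
  | 2 => Lb
  | 3 => flip Lb
  | _ => @E XT
  end.

Lemma decode_good d : (forall a b, decode d a b -> a \in Cs /\ b \in Cs) /\
  strict_weak_order Cs (decode d).
Proof.
rewrite /decode; case: d.1 => [|[|[|[|n]]]].
- by split; [move=> a b /and3P [] | exact: swo_lv].
- by split; [move=> a b /and3P [] | exact: swo_lv].
- by split; [move=> a b /and3P [] | exact: swo_lv].
- by split; [move=> a b /and3P [] | exact: swo_flip_lv].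
- by split; [| exact: swo_E].
Qed.

Definition blkA c a b : nat := decode (0, c) a b + decode (1, c) a b.

Lemma I1 c a b : c \in cs ->
  blkA c a b + ((b == c) && (a == nxt c)) = blkA c b a + ((a == c) && (b == nxt c)).
Proof.
move=> cC; rewrite /blkA /decode /= /lv !inCs.
have ncC := nxt_in cC; have nc := nxt_neq cC.
case: (boolP (a \in cs)) => aC; last first.
  have e1 : (a == c) = false by apply: contraNF aC => /eqP ->.
  have e2 : (a == nxt c) = false by apply: contraNF aC => /eqP ->.
  by rewrite e1 e2 /= ?andbF.
case: (boolP (b \in cs)) => bC; last first.
  have e1 : (b == c) = false by apply: contraNF bC => /eqP ->.
  have e2 : (b == nxt c) = false by apply: contraNF bC => /eqP ->.
  by rewrite e1 e2 /= ?andbF.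
rewrite /= /hA /hB.
have h1 : ~~ ((a == c) && (a == nxt c)).
  by apply/negP => /andP [/eqP -> /eqP e]; move: nc; rewrite -e eqxx.
have h2 : ~~ ((b == c) && (b == nxt c)).
  by apply/negP => /andP [/eqP -> /eqP e]; move: nc; rewrite -e eqxx.
move: h1 h2; move: (a == c) (a == nxt c) (b == c) (b == nxt c).
by case; case; case; case.
Qed.

Lemma I2 c a : c \in cs -> a \in cs ->
  blkA c a (nxt a) = (a == c) + (a == nxt c) + (nxt a == c).
Proof.
move=> cC aC; rewrite /blkA /decode /= /lv !inCs aC (nxt_in aC) /=.
rewrite /hA /hB (inj_eq nxt_inj).
have h1 : ~~ ((a == c) && (a == nxt c)).
  by apply/negP => /andP [/eqP -> /eqP e]; move: (nxt_neq cC); rewrite -e eqxx.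
have h2 : ~~ ((a == c) && (nxt a == c)).
  by apply/negP => /andP [/eqP -> /eqP e]; move: (nxt_neq cC); rewrite e eqxx.
have h3 : ~~ ((a == nxt c) && (nxt a == c)).
  by apply/negP => /andP [/eqP -> /eqP e]; move: (nxt2_neq cC); rewrite e eqxx.
move: h1 h2 h3; move: (a == c) (a == nxt c) (nxt a == c).
by case; case; case.
Qed.

Lemma I3 c a : c \in cs -> a \in cs ->
  blkA c (nxt a) a = (a == nxt c) + (nxt a == c).
Proof.
move=> cC aC; rewrite /blkA /decode /= /lv !inCs aC (nxt_in aC) /=.
rewrite /hA /hB (inj_eq nxt_inj).
have h1 : ~~ ((a == c) && (a == nxt c)).
  by apply/negP => /andP [/eqP -> /eqP e]; move: (nxt_neq cC); rewrite -e eqxx.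
have h2 : ~~ ((a == c) && (nxt a == c)).
  by apply/negP => /andP [/eqP -> /eqP e]; move: (nxt_neq cC); rewrite e eqxx.
have h3 : ~~ ((a == nxt c) && (nxt a == c)).
  by apply/negP => /andP [/eqP -> /eqP e]; move: (nxt2_neq cC); rewrite e eqxx.
move: h1 h2 h3; move: (a == c) (a == nxt c) (nxt a == c).
by case; case; case.
Qed.

Lemma Lsum a b : a \in cs -> b \in cs -> a != b -> Lb a b + Lb b a = 1.
Proof.
move=> aC bC ab; rewrite /Lb /lv !inCs aC bC /=.
have : index a cs != index b cs.
  by apply: contra ab => /eqP e; rewrite -(nth_index x0 aC) -(nth_index x0 bC) e.
move=> ne; case: ltngtP ne => //.
Qed.

Variables (mm pp uu : nat).

Definition blk (c : XT) : seq (nat * XT) := nseq mm (0, c) ++ nseq mm (1, c).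
Definition bl := flatten (map blk cs) ++ nseq pp (2, x0) ++ nseq pp (3, x0) ++ nseq uu (4, x0).

Lemma count_bl (pr : pred (nat * XT)) :
  count pr bl = sumn (map (fun c => (pr (0, c) + pr (1, c)) * mm) cs)
    + (pr (2, x0) + pr (3, x0)) * pp + pr (4, x0) * uu.
Proof.
rewrite /bl !count_cat count_flatten -map_comp !count_nseq.
have -> : [seq (count pr \o blk) i | i <- cs] = map (fun c => (pr (0, c) + pr (1, c)) * mm) cs.
  by apply: eq_map => c /=; rewrite /blk count_cat !count_nseq mulnDl.
lia.
Qed.

Lemma cbl_edge a : a \in cs ->
  count (fun d => decode d a (nxt a)) bl = 3 * mm + pp.
Proof.
move=> aC; rewrite count_bl.
have -> : map (fun c => (decode (0, c) a (nxt a) + decode (1, c) a (nxt a)) * mm) cs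
   = map (fun c => ((a == c) + (a == nxt c) + (nxt a == c)) * mm) cs.
  by apply/eq_in_map => c cC; rewrite -I2.
rewrite sumn_mapM !sumn_mapD !sumn_count.
have e1 : count (fun c => a == c) cs = 1.
  transitivity (count_mem a cs); last by rewrite count_uniq_mem // aC.
  by apply: eq_count => c; rewrite /= eq_sym.
have e2 : count (fun c => a == nxt c) cs = 1.
  transitivity (count_mem (prev cs a) cs); last by rewrite count_uniq_mem // mem_prev aC.
  apply: eq_count => c /=.
  apply/eqP/eqP => [->|->]; first by rewrite prev_next.
  by rewrite /nxt next_prev.
have e3 : count (fun c => nxt a == c) cs = 1.
  transitivity (count_mem (nxt a) cs); last by rewrite count_uniq_mem // nxt_in.
  by apply: eq_count => c; rewrite /= eq_sym.
rewrite e1 e2 e3 /decode /= Lsum //; [lia | exact: nxt_in | by rewrite eq_sym nxt_neq].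
Qed.

Lemma cbl_redge a : a \in cs ->
  count (fun d => decode d (nxt a) a) bl = 2 * mm + pp.
Proof.
move=> aC; rewrite count_bl.
have -> : map (fun c => (decode (0, c) (nxt a) a + decode (1, c) (nxt a) a) * mm) cs
   = map (fun c => ((a == nxt c) + (nxt a == c)) * mm) cs.
  by apply/eq_in_map => c cC; rewrite -I3.
rewrite sumn_mapM !sumn_mapD !sumn_count.
have e2 : count (fun c => a == nxt c) cs = 1.
  transitivity (count_mem (prev cs a) cs); last by rewrite count_uniq_mem // mem_prev aC.
  apply: eq_count => c /=.
  apply/eqP/eqP => [->|->]; first by rewrite prev_next.
  by rewrite /nxt next_prev.
have e3 : count (fun c => nxt a == c) cs = 1.
  transitivity (count_mem (nxt a) cs); last by rewrite count_uniq_mem // nxt_in.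
  by apply: eq_count => c; rewrite /= eq_sym.
rewrite e2 e3 /decode /= addnC Lsum //; [lia | exact: nxt_in | by rewrite nxt_neq].
Qed.

Lemma cbl_ident a b :
  count (fun d => decode d a b) bl + mm * count (fun c => (b == c) && (a == nxt c)) cs =
  count (fun d => decode d b a) bl + mm * count (fun c => (a == c) && (b == nxt c)) cs.
Proof.
have key : forall u w,
   sumn (map (fun c => (decode (0, c) u w + decode (1, c) u w) * mm) cs)
   + mm * count (fun c => (w == c) && (u == nxt c)) cs =
   sumn (map (fun c => (blkA c u w + ((w == c) && (u == nxt c))) * mm) cs).
  move=> u w; rewrite -sumn_count mulnC -sumn_mapM -sumn_mapD.
  congr (sumn _); apply: eq_map => c; by rewrite /blkA !mulnDl.
have e : sumn (map (fun c => (blkA c a b + ((b == c) && (a == nxt c))) * mm) cs) =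
         sumn (map (fun c => (blkA c b a + ((a == c) && (b == nxt c))) * mm) cs).
  by congr (sumn _); apply/eq_in_map => c cC; rewrite I1.
have := key a b; have := key b a; rewrite e !count_bl /decode /= /flip.
lia.
Qed.

End TC.


Lemma size_bl (XT : choiceType) (cs : seq XT) x0 mm pp uu :
  size (bl cs x0 mm pp uu) = 2 * mm * size cs + 2 * pp + uu.
Proof.
rewrite /bl !size_cat !size_nseq.
have -> : size (flatten (map (@blk XT mm) cs)) = 2 * mm * size cs.
  elim: cs => [|c l IH] /=; first by rewrite muln0.
  by rewrite size_cat IH /blk size_cat !size_nseq; lia.
lia.
Qed.

Section TP.
Variables (VT XT : choiceType) (cs : seq XT) (x0 : XT) (W : {fset VT}) (mm pp uu : nat) (v0 : VT).
Hypotheses (ucs : uniq cs) (k3 : 2 < size cs) (x0cs : x0 \in cs) (Wn : W != fset0)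
  (hs : size W = size (bl cs x0 mm pp uu)).

Definition TT : profile VT XT :=
  Profile W (Cs cs) (fun v => decode cs (nth (4, x0) (bl cs x0 mm pp uu) (index v W))).

Lemma map_nth_index :
  map (fun v => nth (4, x0) (bl cs x0 mm pp uu) (index v W)) W = bl cs x0 mm pp uu.
Proof.
apply: (@eq_from_nth _ (4, x0)); first by rewrite size_map hs.
move=> i; rewrite size_map => iW.
by rewrite (nth_map v0) // index_uniq // fset_uniq.
Qed.

Lemma cntT a b : cnt TT a b = count (fun d => decode cs d a b) (bl cs x0 mm pp uu).
Proof.
rewrite /cnt /= -{2}map_nth_index count_map.
by apply: eq_count.
Qed.

Lemma wfT : wf_profile TT.
Proof.
split.
- exact: Wn.
- apply/eqP => /fsetP /(_ x0); rewrite inCs x0cs inE //.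
- move=> v a b /=; case: (boolP (v \in W)) => vW.
    by move=> /(proj1 (decode_good _ _)) [? ?].
  by rewrite memNindex // nth_default // -hs.
- by move=> v _; exact: (proj2 (decode_good _ _)).
Qed.

Lemma TM a b : (0 < margin TT a b)%R ->
  [/\ a \in cs, b = nxt cs a & (margin TT a b <= mm%:Z)%R].
Proof.
rewrite marginE !cntT => mpos.
have id := cbl_ident x0 ucs k3 mm pp uu a b.
set K1 := count _ cs in id; set K2 := count _ cs in id.
have K2le : K2 <= 1.
  apply: (@leq_trans (count (fun c => a == c) cs)); first by apply: sub_count => c /andP [].
  have -> : count (fun c => a == c) cs = count_mem a cs by apply: eq_count => c; rewrite /= eq_sym.
  by rewrite count_uniq_mem // leq_b1.
have K2pos : 0 < K2.
  case: (posnP K2) => // K0; rewrite K0 muln0 addn0 in id.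
  move: mpos; rewrite -id; lia.
have K21 : K2 = 1 by lia.
have : has (fun c => (a == c) && (b == nxt cs c)) cs by rewrite has_count.
move=> /hasP [c cC /andP [/eqP ac /eqP bc]]; subst a b.
split => //.
rewrite K21 muln1 in id; lia.
Qed.

End TP.


Section Main.
Variables (VT XT : choiceType).
Variable (VT_infinite : forall s : {fset VT}, exists v, v \notin s).
Variable (f : vccr VT XT).
Variables (hv : is_vccr f) (han : anonymity f) (hne : neutrality f) (hav : availability f)
  (hind : neutral_indifference f) (hmo : monotonicity_two f) (hrev : neutral_reversal f)
  (hci : coherent_iia f).
Implicit Types (P Q R : profile VT XT).

Definition relabel R (pi : XT -> XT) : profile VT XT :=
  Profile (voters R) (cands R) (fun v a b => ballot R v (pi a) (pi b)).

Definition permv R (sg : VT -> VT) : profile VT XT :=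
  Profile (voters R) (cands R) (fun v => if v \in voters R then ballot R (sg v) else @E XT).

Lemma wf_relabel R pi : wf_profile R -> (forall a, (pi a \in cands R) = (a \in cands R)) ->
  wf_profile (relabel R pi).
Proof.
move=> [w1 w2 w3 w4] hp; rewrite /relabel; split => /=.
- exact: w1.
- exact: w2.
- by move=> v a b /w3 [vV aC bC]; rewrite -hp -(hp b).
- by move=> v vV; apply: swo_comp; [exact: w4 | by move=> a; rewrite hp].
Qed.

Lemma wf_permv R sg : wf_profile R -> (forall v, v \in voters R -> sg v \in voters R) ->
  wf_profile (permv R sg).
Proof.
move=> [w1 w2 w3 w4] hs; rewrite /permv; split => /=.
- exact: w1.
- exact: w2.
- move=> v a b; case: (boolP (v \in voters R)) => vV //.
  by move=> /w3 [].
- by move=> v vV; rewrite vV; apply: w4; apply: hs.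
Qed.

Lemma cnt_permv R sg a b : (forall v, v \in voters R -> sg v \in voters R) ->
  {in voters R &, injective sg} -> cnt (permv R sg) a b = cnt R a b.
Proof.
move=> h1 h2; rewrite /cnt /permv /=.
rewrite (eq_in_count (a2 := fun v => ballot R (sg v) a b)); last by move=> v /= ->.
rewrite -(count_map sg (fun v => ballot R v a b)).
have um : uniq (map sg (voters R)) by rewrite map_inj_in_uniq // fset_uniq.
have sub : {subset map sg (voters R) <= voters R} by move=> z /mapP [v vV ->]; apply: h1.
have [_ eqi] := uniq_min_size um sub (eq_leq (esym (size_map _ _))).
by apply/permP; apply: uniq_perm => //; exact: fset_uniq.
Qed.

Lemma strength_path P a s k : s != [::] -> (k <= strength P a s)%R ->
  path (fun u w => (k <= margin P u w)%R) a s.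
Proof.
elim: s a => [//|b s IH] a _ /=.
case: s IH => [|c s] IH /=; first by move=> ->.
rewrite le_min => /andP [h1 h2]; rewrite h1 /=; exact: IH.
Qed.

Lemma margin_pos_cands P a b : wf_profile P -> (0 < margin P a b)%R ->
  a \in cands P /\ b \in cands P.
Proof.
move=> w; rewrite marginE => h.
have : has (fun v => ballot P v a b) (voters P) by rewrite has_count; move: h; rewrite /cnt; lia.
by move=> /hasP [v _ hb]; have [_ ? ?] := wf_vanish w hb.
Qed.

Lemma iter_mem (cs : seq XT) i a : (iter i (nxt cs) a \in cs) = (a \in cs).
Proof. by elim: i => //= i IH; rewrite /nxt mem_next IH. Qed.

Lemma iter_inj (cs : seq XT) i : uniq cs -> injective (iter i (nxt cs)).
Proof. by move=> u; elim: i => //= i IH a b /(nxt_inj u) /IH. Qed.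

Lemma iter_comm (cs : seq XT) i a : iter i (nxt cs) (nxt cs a) = nxt cs (iter i (nxt cs) a).
Proof. by rewrite -iterSr iterS. Qed.

Lemma reach (cs : seq XT) x y s : uniq cs -> 2 < size cs -> cs = y :: s -> nxt cs x = y ->
  forall j, j < size cs -> iter j.+1 (nxt cs) x = nth y cs j.
Proof.
move=> u k3 ecs nx; elim => [|j IH] jl; first by rewrite /= nx ecs.
rewrite iterS IH; last exact: ltnW.
have jC : nth y cs j \in cs by rewrite mem_nth //; exact: ltnW.
have := index_nxt u k3 jC; rewrite index_uniq //; last exact: ltnW.
rewrite jl => e.
have nC : nxt cs (nth y cs j) \in cs by apply: nxt_in.
by rewrite -e nth_index.
Qed.

Lemma int_eq_aux (a b c : nat) : (Posz a - Posz b)%R = Posz c -> a = b + c.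
Proof. lia. Qed.

Lemma arith1 (N m k p : nat) :
  N + (2 * (3 * m) + (2 * m * k + 2 * p)) = 2 * m * k + 2 * p + (N + 6 * m).
Proof. lia. Qed.

Lemma arith2 (a m : nat) : a + (3 * m + 0) = 2 * m + (a + m).
Proof. lia. Qed.

Lemma partB P x y s : wf_profile P -> f P x y -> majority_path P y s x ->
  (margin P x y <= strength P y s)%R -> False.
Proof.
move=> w fP [sne lastx uq pth] hstr.
have mpos := partA hv han hne hmo hci w fP.
have [xC yC _] := hv w fP.
have xy : x != y by apply/eqP => e; subst y; have [_ _ h] := hv w fP; exact: h.
set m := margin P x y.
have hp := strength_path sne hstr.
set cs := y :: s.
have hcyc : cycle (fun u w => (m <= margin P u w)%R) cs.
  by rewrite /cs /= rcons_path hp lastx /= lexx.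
have xcs : x \in cs by rewrite -lastx mem_last.
have ycs : y \in cs by rewrite inE eqxx.
have k3 : 2 < size cs.
  rewrite /cs /=; case E: s sne lastx pth => [//|b [|c s']] // _ /= bx.
  rewrite andbT bx => hyx.
  by move: hyx mpos; rewrite /m !marginE; lia.
have csC : {subset cs <= cands P}.
  move=> u ucs; have h := next_cycle hcyc ucs.
  by have [] := margin_pos_cands w (lt_le_trans mpos h).
have nxx : nxt cs x = y.
  have ix : index x cs = size s by rewrite /cs -lastx index_last.
  by rewrite /nxt next_nth xcs ix /cs nth_default.
set m' := `|m|%N.
have hm : m = Posz m' by rewrite /m' gez0_abs // ltW.
have hpq : cnt P x y = cnt P y x + m' by apply: int_eq_aux; rewrite -marginE -hm.
have [Q1 hQ1] := add_pairs VT_infinite hrev (3 * m') w xC yC xy.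
have [[wQ1 _ _ _ _] _] := hQ1.
have [Q hQ] := add_empties VT_infinite hind x y (2 * m' * size cs + 2 * cnt P x y) wQ1.
have [[wQ cQ mQ cxy cyx] [sQ fQ']] := ext_trans hQ1 hQ.
have fQ := fQ' fP.
have hs : size (voters Q) = size (bl cs x m' (cnt P x y) (size (voters P) + 6 * m')).
  by rewrite size_bl sQ arith1.
have [v0 _] := VT_infinite fset0.
have Wn : voters Q != fset0 by case: wQ.
have TF : exists T : profile VT XT, [/\ wf_profile T, voters T = voters Q, cands T = Cs cs,
   (forall a, a \in cs -> cnt T a (nxt cs a) = 3 * m' + cnt P x y) &
   (forall a, a \in cs -> cnt T (nxt cs a) a = 2 * m' + cnt P x y)] /\
   (forall a b, (0 < margin T a b)%R -> [/\ a \in cs, b = nxt cs a & (margin T a b <= Posz m')%R]).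
  exists (TT cs x (voters Q) m' (cnt P x y) (size (voters P) + 6 * m')); split; first split.
  - exact: wfT xcs Wn hs.
  - by [].
  - by [].
  - by move=> a aC; rewrite (cntT v0 hs) (cbl_edge x uq k3).
  - by move=> a aC; rewrite (cntT v0 hs) (cbl_redge x uq k3).
  - by move=> a b hpos; apply: (TM v0 uq k3 xcs Wn hs hpos).
have [T [[wT vT cT cE cRe] TMl]] := TF.
have xQ : x \in cands Q by rewrite cQ.
have yQ : y \in cands Q by rewrite cQ.
have xT : x \in cands T by rewrite cT inCs.
have yT : y \in cands T by rewrite cT inCs.
have [_ _ _ t4] := wT.
have [_ _ _ q4] := wQ.
have claim : forall i, f T (iter i (nxt cs) x) (nxt cs (iter i (nxt cs) x)).
  move=> i.
  move: (iter i (nxt cs)) (iter_mem cs i) (@iter_inj cs i uq) (iter_comm cs i) => pi piM piinj piC.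
  have piT : forall a, (pi a \in cands T) = (a \in cands T) by move=> a; rewrite cT !inCs piM.
  have piy : pi y = nxt cs (pi x) by rewrite -nxx piC.
  have w0cs : pi x \in cs by rewrite piM.
  have wTi : wf_profile (relabel T pi) by apply: wf_relabel.
  have [_ _ _ ti4] := wTi.
  have as1 : forall v, v \in voters Q -> ~~ (ballot Q v x y && ballot Q v y x).
    by move=> v vW; exact: (swo_asym (q4 v vW) xQ yQ).
  have as2 : forall v, v \in voters Q ->
      ~~ (ballot (relabel T pi) v x y && ballot (relabel T pi) v y x).
    by move=> v vW; rewrite -vT in vW; exact: (swo_asym (ti4 v vW) xT yT).
  have c1 : count (fun v => ballot Q v x y) (voters Q) =
            count (fun v => ballot (relabel T pi) v x y) (voters Q).
    have h1 : cnt (relabel T pi) x y = cnt T (pi x) (pi y) by [].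
    rewrite piy cE // in h1.
    have c1' : cnt Q x y = cnt (relabel T pi) x y by rewrite h1 cxy addn0 addnC.
    by move: c1'; rewrite /cnt /relabel /= vT.
  have c2 : count (fun v => ballot Q v y x) (voters Q) =
            count (fun v => ballot (relabel T pi) v y x) (voters Q).
    have h1 : cnt (relabel T pi) y x = cnt T (pi y) (pi x) by [].
    rewrite piy cRe // in h1.
    have c2' : cnt Q y x = cnt (relabel T pi) y x by rewrite h1 cyx hpq arith2.
    by move: c2'; rewrite /cnt /relabel /= vT.
  have [sg [s1 s2 s3]] := bij_types (fset_uniq (voters Q)) as1 as2 c1 c2.
  have wQs : wf_profile (permv Q sg) by apply: wf_permv.
  have fQs : f (permv Q sg) x y.
    have eV : voters (permv Q sg) = voters Q by [].
    have eC : cands (permv Q sg) = cands Q by [].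
    apply/(han wQ wQs eV eC s1 s2 _ x y) => //.
    by move=> v vV a b; rewrite /permv /= vV.
  have mQs : forall a b, margin (permv Q sg) a b = margin Q a b.
    by move=> a b; rewrite !marginE !cnt_permv.
  have fTi : f (relabel T pi) x y.
    apply: (hci wQs wTi fQs).
    - rewrite /same_restriction /relabel /permv /=; split.
      + exact: vT.
      + apply/fsetP => a; rewrite !in_fsetI.
        case: (boolP (a \in [fset x; y])) => h; rewrite ?andbF ?andbT //.
        by move: h; rewrite in_fset2 => /orP [] /eqP ->; rewrite ?xT ?yT ?xQ ?yQ.
      + move=> v a b vW; rewrite vW !in_fsetI => /andP [_ ha] /andP [_ hb].
        have [e1 e2] := s3 v vW.
        have [i1 _ _] := q4 (sg v) (s1 v vW).
        have vW' : v \in voters T by rewrite vT.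
        have [i2 _ _] := ti4 v vW'.
        move: e1 e2; rewrite /relabel /= => e1 e2.
        move: ha hb; rewrite !in_fset2 => /orP [] /eqP -> /orP [] /eqP ->.
        * rewrite (negbTE (i1 x xQ)); apply/negbTE; exact: (i2 x xT).
        * by rewrite e1.
        * by rewrite e2.
        * rewrite (negbTE (i1 y yQ)); apply/negbTE; exact: (i2 y yT).
    - rewrite /graph_reduct; split.
      + apply/fsubsetP => a; rewrite /relabel /permv /= cT inCs cQ => /csC //.
      + exact: xT.
      + exact: yT.
      + rewrite !marginE /cnt /relabel /permv /= vT.
        congr (_ - _)%R; congr (Posz _); apply: eq_in_count => v vW; rewrite vW.
          by have [e1 _] := s3 v vW; rewrite e1.
        by have [_ e2] := s3 v vW; rewrite e2.
      + move=> a b aT bT hpos.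
        have e0 : margin (relabel T pi) a b = margin T (pi a) (pi b) by [].
        rewrite e0 in hpos *.
        have [pa pb pm] := TMl _ _ hpos.
        have ba : b = nxt cs a by apply: piinj; rewrite pb piC.
        have acs : a \in cs by rewrite -piM.
        rewrite mQs mQ; subst b.
        have := next_cycle hcyc acs => /= h.
        rewrite hm in h.
        exact: le_trans pm h.
  have eV : voters T = voters (relabel T pi) by [].
  have eC : cands T = cands (relabel T pi) by [].
  have piC' : forall a, a \in cands (relabel T pi) -> pi a \in cands (relabel T pi).
    by move=> a; rewrite /relabel /= piT.
  have piI : {in cands (relabel T pi) &, injective pi} by move=> a b _ _; apply: piinj.
  have hb : forall v a b, v \in voters (relabel T pi) -> a \in cands (relabel T pi) ->
      b \in cands (relabel T pi) -> ballot T v (pi a) (pi b) = ballot (relabel T pi) v a b by [].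
  have h := hne wTi wT eV eC piC' piI hb xT yT.
  by rewrite -piy; apply: h.1.
have [z zT hz] := hav wT.
have zcs : z \in cs by rewrite -inCs -cT.
set w1 := prev cs z.
have w1cs : w1 \in cs by rewrite mem_prev.
have il : index w1 cs < size cs by rewrite index_mem.
have hr := reach uq k3 erefl nxx il.
rewrite nth_index // in hr.
have := claim (index w1 cs).+1; rewrite hr /w1 /nxt next_prev //.
exact: hz.
Qed.

End Main.


Unset Implicit Arguments.
Set Strict Implicit.
Local Close Scope nat_scope.

Theorem theorem7p4 (VT XT : choiceType)
  (VT_infinite : forall s : {fset VT}, exists v, v \notin s)
  (XT_infinite : forall s : {fset XT}, exists x, x \notin s)
  (f : vccr VT XT) :
  is_vccr f -> anonymity f -> neutrality f -> availability f ->
  neutral_indifference f -> monotonicity_two f -> neutral_reversal f ->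
  coherent_iia f ->
  forall P : profile VT XT, wf_profile P ->
  forall x y : XT, f P x y -> sc P x y.
Proof.
move=> hv han hne hav hind hmo hrev hci P w x y fP; split.
- exact: (partA hv han hne hmo hci w fP).
- move=> s mp; rewrite ltNge; apply/negP => h.
  exact: (partB VT_infinite hv han hne hav hind hmo hrev hci w fP mp h).
Qed.
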